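(* Let $\Delta$ be the hereditary class property ''bounded maximum degree'' and $\Lambda$ the hereditary class property ''bounded connected components''. Then $\Delta$ is the decomposition horizon of $\Lambda$. Moreover, $\Lambda^\ast=\Lambda^+=\Delta$.
   Context: Graphs are finite and simple. A hereditary class is a class of graphs closed under isomorphism and induced subgraphs. A hereditary class property is a set $\Pi$ of hereditary classes such that $\mathscr C\in\Pi$, $\mathscr D$ hereditary, $\mathscr D\subseteq\mathscr C$ imply $\mathscr D\in\Pi$. $\Delta$ is the set of hereditary classes $\mathscr C$ for which there is $d$ with every graph in $\mathscr C$ having maximum degree at most $d$; $\Lambda$ is the set of hereditary classes $\mathscr C$ for which there is $c$ with every connected component of every graph in $\mathscr C$ having at most $c$ vertices. For non-decreasing $f:\mathbb N\to\mathbb N$ and positive integer $p$, $\mathscr C$ has an $f$-bounded $\Pi$-decomposition with parameter $p$ if there is $\mathscr D_p\in\Pi$ such that every $G\in\mathscr C$ has a partition $V_1,\dots,V_N$ of $V(G)$ with $N\le f(|G|)$ and $G[V_{i_1}\cup\dots\cup V_{i_p}]\in\mathscr D_p$ for all $i_1,\dots,i_p\in[N]$. $\Pi^+$ (resp. $\Pi^\ast$) is the set of hereditary classes that, for every positive integer $p$, have an $f$-bounded $\Pi$-decomposition with parameter $p$ for some constant function $f$ (resp. some non-decreasing $f$ with $f(n)=n^{o(1)}$). $\Pi$ is a decomposition horizon if $\Pi^\ast=\Pi$; the decomposition horizon of $\Lambda$ is the smallest (under inclusion) decomposition horizon containing $\Lambda$. *)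

(* Defs.v *)
From mathcomp Require Import all_boot.
Set Implicit Arguments. Unset Strict Implicit. Unset Printing Implicit Defensive.

Record sgraph := SGraph {
  vert : finType;
  adj : rel vert;
  adj_sym : symmetric adj;
  adj_irr : irreflexive adj }.

Definition order (G : sgraph) : nat := #|vert G|.

Definition induced_adj (G : sgraph) (S : {set vert G}) :
  rel {x : vert G | x \in S} := fun x y => adj (val x) (val y).

Lemma induced_sym (G : sgraph) (S : {set vert G}) : symmetric (@induced_adj G S).
Proof. by move=> x y; rewrite /induced_adj adj_sym. Qed.

Lemma induced_irr (G : sgraph) (S : {set vert G}) : irreflexive (@induced_adj G S).
Proof. by move=> x; rewrite /induced_adj adj_irr. Qed.

Definition induced (G : sgraph) (S : {set vert G}) : sgraph :=
  @SGraph {x : vert G | x \in S} (@induced_adj G S) (@induced_sym G S) (@induced_irr G S).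

Definition isomorphic (G H : sgraph) : Prop :=
  exists f : vert G -> vert H,
    bijective f /\ forall x y, adj x y = adj (f x) (f y).

Definition gclass := sgraph -> Prop.

Definition hereditary (C : gclass) : Prop :=
  (forall G H, isomorphic G H -> C G -> C H) /\
  (forall G (S : {set vert G}), C G -> C (induced S)).

Definition gprop := gclass -> Prop.

Definition hcp (P : gprop) : Prop :=
  (forall C, P C -> hereditary C) /\
  (forall C D, P C -> hereditary D -> (forall G, D G -> C G) -> P D).

Definition maxdeg_le (G : sgraph) (d : nat) : Prop :=
  forall v : vert G, #|[set u | adj v u]| <= d.

Definition comp_le (G : sgraph) (c : nat) : Prop :=
  forall v : vert G, #|[set u | connect (@adj G) v u]| <= c.

Definition Delta : gprop := fun C =>
  hereditary C /\ exists d, forall G, C G -> maxdeg_le G d.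

Definition Lambda : gprop := fun C =>
  hereditary C /\ exists c, forall G, C G -> comp_le G c.

Definition nondecreasing (f : nat -> nat) : Prop :=
  forall m n, m <= n -> f m <= f n.

(* f(n) = n^{o(1)}: for every k >= 1, eventually 1 <= f(n) and f(n)^k <= n,
   i.e. f(n) <= n^(1/k) eventually. *)
Definition subpoly (f : nat -> nat) : Prop :=
  forall k, 0 < k -> exists n0, forall n, n0 <= n -> 0 < f n /\ f n ^ k <= n.

(* C has an f-bounded P-decomposition with parameter p.  A partition
   V_1,...,V_N of V(G) is encoded by the map col sending each vertex to
   the index of its part. *)
Definition has_decomp (P : gprop) (f : nat -> nat) (p : nat) (C : gclass) : Prop :=
  exists D : gclass, P D /\
    forall G, C G ->
      exists N, N <= f (order G) /\
      exists col : vert G -> 'I_N,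
        forall idx : 'I_p -> 'I_N,
          D (induced [set v | [exists j : 'I_p, col v == idx j]]).

Definition plus (P : gprop) : gprop := fun C =>
  hereditary C /\
  forall p, 0 < p -> exists c : nat, has_decomp P (fun _ => c) p C.

Definition star (P : gprop) : gprop := fun C =>
  hereditary C /\
  forall p, 0 < p -> exists f, nondecreasing f /\ subpoly f /\ has_decomp P f p C.

Definition horizon (P : gprop) : Prop := forall C, star P C <-> P C.

Definition is_horizon_of (P Q : gprop) : Prop :=
  hcp P /\ horizon P /\ (forall C, Q C -> P C) /\
  (forall P', hcp P' -> horizon P' -> (forall C, Q C -> P' C) ->
     forall C, P C -> P' C).

(* Main.v *)
Require Import Defs.
From mathcomp Require Import all_boot.
From mathcomp Require Import zify.
Set Implicit Arguments. Unset Strict Implicit. Unset Printing Implicit Defensive.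

Lemma card_bigcup_le (T I : finType) (A : {pred I}) (F : I -> {set T}) :
  #|\bigcup_(i in A) F i| <= \sum_(i in A) #|F i|.
Proof.
elim/big_rec2: _ => [|i n U _ IH]; first by rewrite cards0.
apply: leq_trans (leq_card_setU (F i) U).1 _; exact: leq_add.
Qed.

Lemma card_inj_le (T U : finType) (h : T -> U) (A : {pred T}) (B : {pred U}) :
  injective h -> (forall x, x \in A -> h x \in B) -> #|A| <= #|B|.
Proof.
move=> hi hAB; rewrite -(card_imset A hi); apply: subset_leq_card.
by apply/subsetP=> y /imsetP [x xA ->]; apply: hAB.
Qed.

Lemma connect_hom (T U : finType) (e : rel T) (e' : rel U) (h : T -> U) :
  (forall x y, e x y -> e' (h x) (h y)) ->
  forall x y, connect e x y -> connect e' (h x) (h y).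
Proof.
move=> he x y /connectP [s pth ->]; elim: s x pth => [|z s IH] x /=.
  by rewrite connect0.
case/andP=> exz pz; exact: connect_trans (connect1 (he _ _ exz)) (IH _ pz).
Qed.

Lemma comp_le_induced (G : sgraph) (S : {set vert G}) c :
  comp_le G c -> comp_le (induced S) c.
Proof.
move=> hc v; apply: leq_trans (hc (val v)).
apply: (@card_inj_le _ _ val); first exact: val_inj.
move=> x; rewrite !inE => hx.
exact: (@connect_hom _ _ (@adj (induced S)) (@adj G) val (fun x y h => h)).
Qed.

Lemma comp_le_iso (G H : sgraph) c : isomorphic G H -> comp_le G c -> comp_le H c.
Proof.
move=> [f [[g fg gf] hadj]] hc w.
apply: leq_trans (hc (g w)).
apply: (@card_inj_le _ _ g); first exact: can_inj gf.
move=> x; rewrite !inE; apply: connect_hom => a b hab.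
by rewrite hadj !gf.
Qed.

Fixpoint wlk (G : sgraph) (k : nat) (v u : vert G) : bool :=
  if k is k'.+1 then wlk k' v u || [exists w, wlk k' v w && adj w u] else v == u.

Lemma wlk_mono (G : sgraph) k l (v u : vert G) : k <= l -> wlk k v u -> wlk l v u.
Proof.
elim: l => [|l IH]; first by rewrite leqn0 => /eqP ->.
rewrite leq_eqVlt => /orP [/eqP -> //| hk] h /=.
by rewrite IH.
Qed.

Lemma wlk_refl (G : sgraph) k (v : vert G) : wlk k v v.
Proof. by elim: k => /= [|k ->]. Qed.

Lemma wlk_front (G : sgraph) k (v w u : vert G) :
  adj v w -> wlk k w u -> wlk k.+1 v u.
Proof.
move=> hvw; elim: k u => [|k IH] u /=.
  move/eqP <-; apply/orP; right; apply/existsP; exists v; by rewrite eqxx hvw.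
move/orP => [h | /existsP [z /andP [h1 h2]]]; first by apply/orP; left; exact: IH.
apply/orP; right; apply/existsP; exists z; apply/andP; split; [exact: IH | exact: h2].
Qed.

Lemma wlk_sym (G : sgraph) k (v u : vert G) : wlk k v u -> wlk k u v.
Proof.
elim: k u => [|k IH] u /=; first by rewrite eq_sym.
move/orP => [h | /existsP [w /andP [h1 h2]]]; first by apply/orP; left; exact: IH.
apply: (@wlk_front _ _ _ w); first by rewrite adj_sym.
exact: IH.
Qed.

Lemma wlk_val (G : sgraph) (S : {set vert G}) k (a b : vert (induced S)) :
  wlk k a b -> wlk k (val a) (val b).
Proof.
elim: k b => [|k IH] b /=; first by move/eqP ->.
move/orP => [h | /existsP [w /andP [h1 h2]]]; first by apply/orP; left; exact: IH.
apply/orP; right; apply/existsP; exists (val w); apply/andP; split; [exact: IH | exact: h2].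
Qed.

Lemma wlk_card (G : sgraph) d k (v : vert G) :
  maxdeg_le G d -> #|[set u | wlk k v u]| <= (d.+1) ^ k.
Proof.
move=> hd; elim: k => [|k IH].
  rewrite expn0; apply: leq_trans (_ : #|[set v]| <= 1); last by rewrite cards1.
  by apply: subset_leq_card; apply/subsetP => u; rewrite !inE eq_sym.
set B := [set u | wlk k v u] in IH *.
have sub : [set u | wlk k.+1 v u] \subset B :|: \bigcup_(w in B) [set u | adj w u].
  apply/subsetP => u; rewrite !inE /= => /orP [h | /existsP [w /andP [h1 h2]]].
    by rewrite h.
  apply/orP; right; apply/bigcupP; exists w; by rewrite ?inE.
apply: leq_trans (subset_leq_card sub) _.
apply: leq_trans (leq_card_setU _ _).1 _.
apply: leq_trans (leq_add (leqnn _) (card_bigcup_le _ _)) _.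
have : \sum_(w in B) #|[set u | adj w u]| <= \sum_(w in B) d.
  by apply: leq_sum => w _; apply: hd.
rewrite sum_nat_const expnSr => h2.
have := leq_add (leqnn #|B|) h2.
move=> h3; apply: leq_trans h3 _.
have : #|B| * d.+1 <= (d.+1)^k * d.+1 by rewrite leq_mul2r IH orbT.
rewrite mulnS; lia.
Qed.

Lemma coloring (G : sgraph) d p : maxdeg_le G d ->
  exists col : vert G -> 'I_((d.+1)^p).+1,
    forall u v, u != v -> wlk p u v -> col u != col v.
Proof.
move=> hd.
suff H : forall n (S : {set vert G}), #|S| = n -> exists col : vert G -> 'I_((d.+1)^p).+1,
   forall u v, u \in S -> v \in S -> u != v -> wlk p u v -> col u != col v.
  have [col hc] := H _ [set: vert G] erefl.
  by exists col => u v; apply: hc; rewrite inE.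
elim => [|n IH] S hS.
  exists (fun _ => ord0) => u v; move/cards0_eq: hS => ->; by rewrite in_set0.
have [x xS] : exists x, x \in S by apply/set0Pn; rewrite -card_gt0 hS.
have hS' : #|S :\ x| = n by move: hS; rewrite (cardsD1 x S) xS add1n => -[].
have [col' hc'] := IH _ hS'.
set F := [set col' w | w in [set u | wlk p x u]].
have hF : #|F| < #|'I_((d.+1)^p).+1|.
  rewrite card_ord ltnS; apply: leq_trans (leq_imset_card _ _) _; exact: wlk_card.
have [c cF] : exists c, c \in ~: F.
  apply/set0Pn; rewrite -card_gt0; move: hF; rewrite -(cardsC F); lia.
rewrite inE in cF.
exists (fun w => if w == x then c else col' w) => u v uS vS uv huv.
have wF : forall w, wlk p x w -> col' w \in F.
  by move=> w hw; apply/imsetP; exists w; rewrite ?inE.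
have [ex|nx] := eqVneq u x; have [ey|ny] := eqVneq v x.
- by rewrite ex ey eqxx in uv.
- rewrite ex in huv; apply/eqP => e; move: cF; rewrite e wF //.
- rewrite ey in huv; apply/eqP => e; move: cF; rewrite -e wF //; exact: wlk_sym.
- apply: (hc' u v) => //; by rewrite !inE ?nx ?ny.
Qed.

Lemma chain (H : sgraph) (a : vert H) k u :
  wlk k.+1 a u -> ~~ wlk k a u ->
  exists f : nat -> vert H, f 0 = a /\ f k.+1 = u /\
   (forall i, i <= k -> adj (f i) (f i.+1)) /\
   (forall i, i <= k.+1 -> wlk i a (f i)) /\
   (forall i, 0 < i <= k.+1 -> ~~ wlk i.-1 a (f i)).
Proof.
elim: k u => [|k IH] u.
  move=> /= /orP [/eqP e | /existsP [w /andP [/eqP e h]]] hn.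
    by rewrite e eqxx in hn.
  subst w.
  exists (fun i => if i is 0 then a else u); do 2! split => //.
  split; first by move=> i; rewrite leqn0 => /eqP ->.
  split; first (case => [|[|i]] //= _; apply/orP; right; apply/existsP; exists a; by rewrite eqxx h).
  by case => [|[|i]] //=.
move=> /= /orP [h | /existsP [w /andP [h1 h2]]] hn; first by rewrite h in hn.
have hw : ~~ wlk k a w.
  apply/negP => hw; move/negP: hn; apply; rewrite /=; apply/orP; right.
  apply/existsP; exists w; by rewrite hw h2.
have [f [f0 [fk [fadj [fw fn]]]]] := IH w h1 hw.
exists (fun i => if i == k.+2 then u else f i).
split; first done.
split; first by rewrite eqxx.
split.
  move=> i hi; have [e|ne] := eqVneq i k.+1.
    subst i; rewrite eqxx; have -> : (k.+1 == k.+2) = false by lia.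
    by rewrite fk.
  have -> : (i == k.+2) = false by lia.
  have -> : (i.+1 == k.+2) = false by lia.
  apply: fadj; lia.
split.
  move=> i hi; have [e|ne] := eqVneq i k.+2.
    subst i; change (wlk k.+1 a u || [exists w, wlk k.+1 a w && adj w u]).
    apply/orP; right; apply/existsP; exists w; by apply/andP.
  apply: fw; lia.
move=> i hi; have [e|ne] := eqVneq i k.+2.
  by subst i.
apply: fn; lia.
Qed.

Lemma chain_wlk (H : sgraph) (f : nat -> vert H) k :
  (forall i, i <= k -> adj (f i) (f i.+1)) ->
  forall t i, i + t <= k.+1 -> wlk t (f i) (f (i + t)).
Proof.
move=> fadj; elim => [|t IH] i hi; first by rewrite addn0 /= eqxx.
rewrite /= addnS; apply/orP; right; apply/existsP; exists (f (i + t)).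
rewrite IH; last lia.
by rewrite fadj //; lia.
Qed.

Lemma comp_bound (G : sgraph) d k N (col : vert G -> 'I_N) (idx : 'I_k.+1 -> 'I_N) :
  maxdeg_le G d ->
  (forall u v, u != v -> wlk k.+1 u v -> col u != col v) ->
  comp_le (induced [set v | [exists j, col v == idx j]]) ((d.+1)^k).
Proof.
move=> hd hcol v.
set T := [set v | [exists j, col v == idx j]].
have key : forall x y : vert (induced T), wlk k v x -> adj x y -> wlk k v y.
  move=> x y hx hxy; apply/negPn/negP => hy.
  have hp : wlk k.+1 v y.
    rewrite /=; apply/orP; right; apply/existsP; exists x; by apply/andP.
  have [f [f0 [fk [fadj [fw fn]]]]] := chain hp hy.
  pose g := fun i : 'I_k.+2 => col (val (f i)).
  have glt : forall i j : 'I_k.+2, i < j -> g i != g j.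
    move=> i j hij; have hi := ltn_ord i; have hj := ltn_ord j; apply: hcol.
      apply/negP => /eqP /val_inj e.
      have : wlk j.-1 v (f i) by apply: wlk_mono (fw i _); lia.
      rewrite e; move: (fn j); rewrite (_ : 0 < j <= k.+1); last lia.
      by move=> /(_ isT) /negbTE ->.
    have e2 : i + (j - i) = j by lia.
    have h := @chain_wlk _ f k fadj (j - i) i ltac:(lia); rewrite e2 in h.
    apply: (wlk_mono (k := j - i)); first lia.
    exact: wlk_val.
  have ginj : injective g.
    move=> i j e; apply: val_inj; case: (ltngtP i j) => // hij.
      by move: (glt _ _ hij); rewrite e eqxx.
    by move: (glt _ _ hij); rewrite e eqxx.
  have hsub : [set g i | i in 'I_k.+2] \subset [set idx j | j in 'I_k.+1].
    apply/subsetP => c /imsetP [i _ ->].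
    have := valP (f i); rewrite inE => /existsP [j /eqP hj].
    by apply/imsetP; exists j.
  have h1 := subset_leq_card hsub; rewrite card_imset // card_ord in h1.
  have h2 := leq_imset_card idx [set: 'I_k.+1]; rewrite cardsT card_ord in h2.
  have e3 : [set idx j | j in 'I_k.+1] = [set idx j | j in [set: 'I_k.+1]].
    by apply/setP => c; apply/imsetP/imsetP => -[j _ ->]; exists j.
  rewrite e3 in h1; by move: (leq_trans h1 h2); rewrite ltnn.
have clos : forall (s : seq (vert (induced T))) x, wlk k v x -> path (@adj (induced T)) x s -> wlk k v (last x s).
  elim => [|z s IH] x //= hx /andP [hxz hs]; apply: IH hs; exact: key hxz.
have sub : [set y | connect (@adj (induced T)) v y] \subset [set y | wlk k v y].
  apply/subsetP => y; rewrite !inE => /connectP [s hs ->].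
  by apply: clos hs; apply: wlk_refl.
apply: leq_trans (subset_leq_card sub) _.
apply: leq_trans (@wlk_card G d k (val v) hd).
apply: (@card_inj_le _ _ val); first exact: val_inj.
by move=> x; rewrite !inE; apply: wlk_val.
Qed.

Lemma delta_plus (C : gclass) : Delta C ->
  forall p, 0 < p -> exists N, 0 < N /\ has_decomp Lambda (fun _ => N) p C.
Proof.
move=> [hC [d hd]] [//|k] _.
exists ((d.+1)^k.+1).+1; split => //.
exists (fun H => C H /\ comp_le H ((d.+1)^k)); split.
  split; last by exists ((d.+1)^k) => G [].
  split.
    move=> G H iso [cG lG]; split; [exact: hC.1 _ _ iso cG | exact: comp_le_iso iso lG].
  move=> G S [cG lG]; split; [exact: hC.2 | exact: comp_le_induced].
move=> G cG; exists ((d.+1)^k.+1).+1; split => //.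
have [col hcol] := coloring k.+1 (hd G cG).
exists col => idx; split; first exact: hC.2.
exact: comp_bound (hd G cG) hcol.
Qed.

Lemma star_delta (C : gclass) : star Delta C -> Delta C.
Proof.
move=> [hC hp].
have [f [fmon [fsub [D [[hD [dD hdD]] hdec]]]]] := hp 2 isT.
have [n0 hn0] := fsub 2 isT.
split => //; exists (n0 + dD * dD + 1) => G cG v.
set A := [set u | adj v u].
set S := v |: A.
have cH : C (induced S) := hC.2 G S cG.
have [N [hN [col hcol]]] := hdec _ cH.
have vS : v \in S := setU11 v A.
pose vH := (exist _ v vS : vert (induced S)).
set NH := [set u : vert (induced S) | adj v (val u)].
have c1 : #|A| <= #|NH|.
  apply: leq_trans (leq_imset_card val NH).
  apply: subset_leq_card; apply/subsetP => u uA.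
  have uS : u \in S by rewrite /S in_setU1 uA orbT.
  apply/imsetP; exists (exist _ u uS) => //.
  by rewrite inE /=; rewrite inE in uA.
have c2 : #|NH| <= N * dD.
  have sub : NH \subset \bigcup_(j < N) [set u in NH | col u == j].
    by apply/subsetP => u uN; apply/bigcupP; exists (col u) => //; rewrite inE uN eqxx.
  apply: leq_trans (subset_leq_card sub) _.
  apply: leq_trans (card_bigcup_le _ _) _.
  have : \sum_(j < N) #|[set u in NH | col u == j]| <= \sum_(j < N) dD.
    apply: leq_sum => j _.
    pose idx := fun t : 'I_2 => if t == ord0 then col vH else j.
    set T := [set x | [exists t : 'I_2, col x == idx t]].
    have vT : vH \in T by rewrite inE; apply/existsP; exists ord0.
    pose w := (exist _ vH vT : vert (induced T)).
    apply: leq_trans (hdD _ (hcol idx) w).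
    apply: leq_trans (leq_imset_card val _).
    apply: subset_leq_card; apply/subsetP => u; rewrite inE => /andP [uN /eqP cu].
    have uT : u \in T.
      by rewrite inE; apply/existsP; exists (@Ordinal 2 1 isT); rewrite /idx /= cu.
    apply/imsetP; exists (exist _ u uT) => //.
    by rewrite inE /=; rewrite inE in uN.
  by rewrite sum_nat_const card_ord.
have hS : Defs.order (induced S) <= #|A|.+1.
  rewrite /Defs.order /= card_sig.
  by rewrite /S cardsU1; case: (v \notin A).
have fN : N <= f #|A|.+1 := leq_trans hN (fmon _ _ hS).
rewrite -/A.
case: (ltnP #|A|.+1 n0) => hlt; first lia.
have [_ hf] := hn0 _ hlt.
have hA : #|A| <= f #|A|.+1 * dD.
  apply: leq_trans (leq_trans c1 c2) _; exact: leq_mul.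
have : #|A| * #|A| <= #|A|.+1 * (dD * dD).
  apply: leq_trans (leq_mul hA hA) _.
  rewrite (_ : f #|A|.+1 * dD * (f #|A|.+1 * dD) = (f #|A|.+1 ^ 2) * (dD * dD)).
    exact: leq_mul.
  by rewrite expnS expn1 -!mulnA; congr (_ * _); rewrite mulnCA.
nia.
Qed.

Lemma lam_delta (C : gclass) : Lambda C -> Delta C.
Proof.
move=> [hC [c hc]]; split => //; exists c => G cG v.
apply: leq_trans (hc G cG v); apply: subset_leq_card.
by apply/subsetP => u; rewrite !inE => h; apply: connect1.
Qed.

Lemma has_decomp_mono (P Q : gprop) f g p C :
  (forall D, P D -> Q D) -> (forall n, f n <= g n) ->
  has_decomp P f p C -> has_decomp Q g p C.
Proof.
move=> hPQ hfg [D [hD hdec]]; exists D; split; first exact: hPQ.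
move=> G cG; have [N [hN hc]] := hdec G cG; exists N; split => //.
exact: leq_trans hN (hfg _).
Qed.

Lemma subpoly_const N : 0 < N -> subpoly (fun _ => N).
Proof. by move=> hN k _; exists (N ^ k) => n hn; split. Qed.

Lemma star_mono (P Q : gprop) C : (forall D, P D -> Q D) -> star P C -> star Q C.
Proof.
move=> hPQ [hC h]; split => // p hp; have [f [f1 [f2 f3]]] := h p hp.
exists f; do 2! split => //; exact: has_decomp_mono hPQ (fun n => leqnn _) f3.
Qed.

Lemma plus_star (P : gprop) C : plus P C -> star P C.
Proof.
move=> [hC h]; split => // p hp; have [c hc] := h p hp.
exists (fun _ => c.+1); split; first by move=> m n _.
split; first exact: subpoly_const.
exact: has_decomp_mono (fun D h => h) (fun n => leqnSn c) hc.
Qed.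

Lemma delta_plus' C : Delta C -> plus Lambda C.
Proof.
move=> hD; split; first exact: hD.1.
move=> p hp; have [N [_ h]] := delta_plus hD hp; by exists N.
Qed.

Lemma delta_star C : Delta C -> star Delta C.
Proof.
move=> [hC hd]; split => // p hp; exists (fun _ => 1); split; first by move=> m n _.
split; first exact: subpoly_const.
exists C; split; first by split.
move=> G cG; exists 1; split => //; exists (fun _ => ord0) => idx; exact: hC.2.
Qed.

Theorem mainTheorem3 :
  is_horizon_of Delta Lambda /\
  (forall C, star Lambda C <-> plus Lambda C) /\
  (forall C, plus Lambda C <-> Delta C).
Proof.
split.
  split.
    split; first by move=> C [].
    move=> C D [hC [d hd]] hD sub; split => //; exists d => G /sub; exact: hd.
  split; first by move=> C; split; [exact: star_delta | exact: delta_star].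
  split; first exact: lam_delta.
  move=> P' hP' hz hLP' C hDC; apply/hz; split; first exact: hDC.1.
  move=> p hp; have [N [N0 hd]] := delta_plus hDC hp.
  exists (fun _ => N); split; first by move=> m n _.
  split; first exact: subpoly_const.
  exact: has_decomp_mono hLP' (fun n => leqnn _) hd.
split.
  move=> C; split; last exact: plus_star.
  move=> hs; apply: delta_plus'; apply: star_delta; exact: star_mono lam_delta hs.
move=> C; split; last exact: delta_plus'.
move=> h; apply: star_delta; apply: star_mono lam_delta _; exact: plus_star.
Qed.
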